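(* Fix any strategy $\mathcal{G}$ for the partial feedback game, let $\pi\sim\mathcal{S}_{m,n}$ be uniform, and let $H_{t-1}$ be the (random) history up to time $t-1$. For any history $h_{t-1}$ up to time $t-1$ (occurring with positive probability) and any $i\in[n]$, \[\Pr[\pi_t = i \mid H_{t-1} = h_{t-1}]\le \frac{m_i(h_{t-1})}{mn-a_i(h_{t-1}) - Y(h_{t-1})}.\]
   Context: $\mathcal{S}_{m,n}$ is the set of words over $[n]$ in which each symbol appears exactly $m$ times (a deck of $mn$ cards), and $\pi\sim\mathcal{S}_{m,n}$ is uniform. In the partial feedback game the guesser makes guesses $g_1,\dots,g_{mn}\in[n]$ sequentially; after guess $g_t$ they learn only $y_t\in\{0,1\}$, where $y_t=1$ iff $\pi_t=g_t$. A strategy chooses $g_t$ as a function of $(g_1,\dots,g_{t-1},y_1,\dots,y_{t-1})$. A history up to time $s$ is $h_s=((g_1,\dots,g_s),(y_1,\dots,y_s))$; $H_s$ denotes the random history produced by the strategy on $\pi$. For a history $h_s$: $Y(h_s)=\sum_{r\le s} y_r$ is the number of correct guesses, $a_i(h_s)=|\{r\le s: g_r=i\}|$ is the number of times $i$ has been guessed, and $m_i(h_s)=m-|\{r\le s: g_r=i,\ y_r=1\}|$.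
   Formalization: The bound is claimed only for histories $h_{t-1}$ with $mn-a_i(h_{t-1}) - Y(h_{t-1}) > 0$, an extra hypothesis requiring the denominator to be positive. The statement above fails without it. *)

(* Defs.v *)
From mathcomp Require Import all_boot all_order all_algebra.
Set Implicit Arguments. Unset Strict Implicit. Unset Printing Implicit Defensive.
Import Order.TTheory GRing.Theory Num.Theory.

(* Symbols [n] are modelled by 'I_n; times t = 1..mn by 0-based positions
   j : 'I_(m*n) with t = j+1.  A history is the sequence of pairs (g_r, y_r). *)
Definition hist (n : nat) := seq ('I_n * bool).

Definition strategy (n : nat) := hist n -> 'I_n.

Definition word (m n : nat) := (m * n).-tuple 'I_n.

Definition Smn (m n : nat) : {set word m n} :=
  [set p : word m n | [forall i : 'I_n, count_mem i (val p) == m]].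

Fixpoint play (n : nat) (G : strategy n) (past : hist n) (p : seq 'I_n) (s : nat)
  : hist n :=
  match s, p with
  | s'.+1, x :: p' => let g := G past in play G (rcons past (g, x == g)) p' s'
  | _, _ => past
  end.

Definition history (m n : nat) (G : strategy n) (pi : word m n) (s : nat) : hist n :=
  play G [::] (val pi) s.

Definition Pr (m n : nat) (E : pred (word m n)) : rat :=
  (#|[set p in Smn m n | E p]|%:R / #|Smn m n|%:R)%R.

Definition cPr (m n : nat) (A B : pred (word m n)) : rat :=
  (Pr (predI A B) / Pr B)%R.

Definition Ycnt (n : nat) (h : hist n) : nat := count (fun gy => gy.2) h.
Definition acnt (n : nat) (h : hist n) (i : 'I_n) : nat :=
  count (fun gy => gy.1 == i) h.
Definition mcnt (m n : nat) (h : hist n) (i : 'I_n) : rat :=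
  (m%:R - (count (fun gy => (gy.1 == i) && gy.2) h)%:R)%R.

(* Main.v *)
Require Import Defs.
From mathcomp Require Import all_boot all_order all_algebra.
From mathcomp Require Import perm ring lra.
Import Order.TTheory GRing.Theory Num.Theory.

Section PlayLemmas.
Variables (n : nat) (G : strategy n) (x0 : 'I_n) (d : 'I_n * bool).

Lemma playA s : forall (past : hist n) (p : seq 'I_n), s <= size p ->
  let h' := play G past p s in
  [/\ size h' = size past + s,
      forall r, r < size past -> nth d h' r = nth d past r &
      forall r, r < s -> (nth x0 p r == (nth d h' (size past + r)).1)
                         = (nth d h' (size past + r)).2].
Proof.
elim: s => [|s IH] past [|x p'] //= Hs.
- split; first by rewrite addn0. by []. by [].
- split; first by rewrite addn0. by []. by [].
- have [E1 E2 E3] := IH (rcons past (G past, x == G past)) p' Hs.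
  rewrite size_rcons in E1 E2 E3.
  split.
  + by rewrite E1 addSnnS.
  + move=> r Hr. rewrite E2; last by apply: ltnW; rewrite ltnS.
    by rewrite nth_rcons Hr.
  + move=> [|r] Hr.
    * rewrite addn0 E2 // nth_rcons ltnn eqxx /=. by [].
    * rewrite /= -addSnnS E3 //.
Qed.

Lemma playB s : forall (past : hist n) (p q : seq 'I_n), s <= size p -> s <= size q ->
  (forall r, r < s -> (nth x0 q r == (nth d (play G past p s) (size past + r)).1)
                         = (nth d (play G past p s) (size past + r)).2) ->
  play G past q s = play G past p s.
Proof.
elim: s => [|s IH] past [|x p'] [|y q'] //= Hp Hq H.
have [E1 E2 E3] := playA s (rcons past (G past, x == G past)) p' Hp.
have H0 := H 0 isT. rewrite addn0 E2 ?size_rcons // nth_rcons ltnn eqxx /= in H0.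
rewrite H0. apply: IH => // r Hr.
have := H r.+1 Hr. by rewrite /= size_rcons addSnnS.
Qed.
End PlayLemmas.

Section Main.
Variables (m n : nat) (G : strategy n) (j : 'I_(m * n)) (h : hist n) (i : 'I_n).
Let d : 'I_n * bool := (i, false).
Let N := m * n.

Definition consb (q : word m n) : bool :=
  [forall r : 'I_(m * n), (r < j) ==> ((tnth q r == (nth d h r).1) == (nth d h r).2)].

Lemma size_hist (p : word m n) : size (history G p j) = j.
Proof.
have Hs : j <= size (val p) by rewrite size_tuple ltnW.
by have [E1 _ _] := playA n G i d j [::] (val p) Hs.
Qed.

Lemma E_char (p0 q : word m n) : history G p0 j = h ->
  (history G q j == h) = consb q.
Proof.
move=> Hh; apply/eqP/forallP.
- move=> Hq r; apply/implyP => Hr.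
  have Hs : j <= size (val q) by rewrite size_tuple ltnW.
  have [_ _ E3] := playA n G i d j [::] (val q) Hs.
  move: (E3 r Hr); rewrite /= add0n.
  have Hq' : play G [::] (val q) j = h := Hq.
  rewrite Hq' (tnth_nth i) => E; apply/eqP; exact: E.
- move=> Hc. have Hh' : play G [::] (val p0) j = h := Hh.
  rewrite -Hh'. change (play G [::] (val q) j = play G [::] (val p0) j).
  have Hs : j <= size (val q) by rewrite size_tuple ltnW.
  have Hs0 : j <= size (val p0) by rewrite size_tuple ltnW.
  apply: (playB n G i d j [::] (val p0) (val q) Hs0 Hs).
  move=> r Hr. rewrite add0n Hh'.
  have Hr' : r < m * n by apply: ltn_trans Hr _.
  move: (Hc (Ordinal Hr')) => /implyP /(_ Hr) /eqP.
  by rewrite (tnth_nth i).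
Qed.

Lemma size_h (p0 : word m n) : history G p0 j = h -> size h = j.
Proof. by move=> <-; apply: size_hist. Qed.

Lemma count_h (P : pred ('I_n * bool)) : size h = j ->
  #|[set x : 'I_(m * n) | (x < j) && P (nth d h x)]| = count P h.
Proof.
move=> Hs.
rewrite -sum1_count (big_nth d) Hs big_mkord.
have Hj : j <= m * n by apply: ltnW.
rewrite (big_ord_widen_cond _ (fun i0 => P (nth d h i0)) (fun _ => 1) Hj).
rewrite sum1dep_card. apply: eq_card => x. by rewrite !inE andbC.
Qed.

Lemma count_tuple (p : word m n) (a : 'I_n) :
  count_mem a (val p) = #|[set x : 'I_(m * n) | tnth p x == a]|.
Proof.
by rewrite -sum1_count big_tuple sum1dep_card.
Qed.

Definition Fset : {set 'I_(m * n)} :=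
  [set x : 'I_(m * n) | (j <= x) || (((nth d h x).1 != i) && ~~ (nth d h x).2)].
Definition cc := count (fun gy : 'I_n * bool => (gy.1 == i) && gy.2) h.

Lemma perp (p : word m n) : p \in Smn m n -> consb p -> size h = j ->
  #|[set x in Fset | tnth p x == i]| + cc = m.
Proof.
move=> Sp Cp Hs.
have Hm : count_mem i (val p) = m by move: Sp; rewrite inE => /forallP /(_ i) /eqP.
rewrite -[RHS]Hm count_tuple -(cardsID Fset [set x | tnth p x == i]).
congr (_ + _).
- apply: eq_card => x; rewrite !inE andbC. by [].
- rewrite /cc -(count_h _ Hs). apply: eq_card => x; rewrite !inE.
  move: Cp => /forallP /(_ x) /implyP.
  case: (ltnP x j) => Hx /=.
  + move=> /(_ isT). case: (nth d h x) => g y /=.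
    case: y; case: (tnth p x =P g) => [->|Hne] //=.
    * by rewrite andbT andbF.
    * rewrite andbF andbT negbK => _; apply/esym/andP => [[/eqP Hg /eqP Hp]].
      by apply: Hne; rewrite Hp Hg.
  + by [].
Qed.

Definition sw (k : 'I_(m * n)) (p : word m n) : word m n :=
  [tuple tnth p (tperm j k x) | x < m * n].

Lemma sw_invol k : involutive (sw k).
Proof. by move=> p; apply: eq_from_tnth => x; rewrite !tnth_mktuple tpermK. Qed.

Lemma sw_S k p : p \in Smn m n -> sw k p \in Smn m n.
Proof.
rewrite !inE => /forallP H; apply/forallP => a.
rewrite count_tuple.
have -> : #|[set x | tnth (sw k p) x == a]| =
          #|(fun x => tperm j k x) @^-1: [set x | tnth p x == a]|.
  by apply: eq_card => x; rewrite !inE tnth_mktuple.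
rewrite card_preimset; last exact: perm_inj.
by rewrite -count_tuple.
Qed.

Lemma sw_cons k p : k \in Fset -> consb p -> tnth p j = i -> consb (sw k p).
Proof.
move=> Hk /forallP Cp Hpj; apply/forallP => r; apply/implyP => Hr.
rewrite tnth_mktuple.
case: (eqVneq k r) => [Ekr|Nkr].
- rewrite -Ekr tpermR Hpj. rewrite -Ekr in Hr.
  move: Hk; rewrite inE leqNgt Hr /= => /andP [Hg Hy].
  by rewrite [i == _]eq_sym (negbTE Hg) (negbTE Hy).
- have Njr : j != r by apply/eqP => E; rewrite E ltnn in Hr.
  rewrite tpermD //. by move: (Cp r) => /implyP /(_ Hr).
Qed.

Lemma sum_bool (T : finType) (A : {set T}) (P : pred T) :
  \sum_(p in A) (P p : nat) = #|[set p in A | P p]|.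
Proof.
rewrite -sum1_card [RHS]big_mkcond [LHS]big_mkcond /=; apply: eq_bigr => p _.
by rewrite !inE; case: (p \in A); case: (P p).
Qed.

Definition Eset := [set p in Smn m n | consb p].
Definition Nk (k : 'I_(m * n)) := #|[set p in Eset | tnth p k == i]|.

Lemma claim1 k : k \in Fset -> Nk j <= Nk k.
Proof.
move=> Hk; rewrite /Nk -(card_imset _ (can_inj (sw_invol k))).
apply: subset_leq_card; apply/subsetP => q /imsetP [p Hp ->].
move: Hp; rewrite !inE => /andP [/andP [Sp Cp] /eqP Hpj].
have Sp' : p \in Smn m n by rewrite inE.
have := sw_S k p Sp'; rewrite inE => ->.
by rewrite sw_cons //= tnth_mktuple tpermR Hpj eqxx.
Qed.

Lemma claim2 : size h = j ->
  \sum_(k in Fset) Nk k = #|Eset| * (m - cc).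
Proof.
move=> Hs.
rewrite /Nk. under eq_bigr => k _ do rewrite -sum_bool.
rewrite exchange_big /=. rewrite -sum_nat_const. apply: eq_bigr => p.
rewrite inE => /andP [Sp Cp].
rewrite sum_bool; apply/eqP; rewrite -(eqn_add2r cc) (perp p Sp Cp Hs) subnK //.
rewrite -(perp p Sp Cp Hs); exact: leq_addl.
Qed.

Lemma claim3 : size h = j -> m * n <= #|Fset| + acnt h i + Ycnt h.
Proof.
move=> Hs.
have E := cardsC Fset; rewrite card_ord in E.
suff H : #|~: Fset| <= acnt h i + Ycnt h.
  by apply: (leq_trans (eq_leq (esym E))); rewrite -addnA leq_add2l.
have Hsub : ~: Fset \subset [set x : 'I_(m * n) | (x < j) && (fun gy : 'I_n * bool => gy.1 == i) (nth d h x)]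
           :|: [set x : 'I_(m * n) | (x < j) && (fun gy : 'I_n * bool => gy.2) (nth d h x)].
  apply/subsetP => x; rewrite !inE negb_or -ltnNge negb_and !negbK => /andP [Hx].
  by rewrite Hx /=.
apply: leq_trans (subset_leq_card Hsub) _.
rewrite /acnt /Ycnt -!(count_h _ Hs).
exact: leq_card_setU.
Qed.

End Main.

Local Open Scope ring_scope.

Theorem lemma3p1 (m n : nat) (G : strategy n) (j : 'I_(m * n))
    (h : hist n) (i : 'I_n) :
  0 < Pr (fun p : word m n => history G p j == h) ->
  0 < ((m * n)%:R - (acnt h i)%:R - (Ycnt h)%:R : rat) ->
  cPr (fun p : word m n => tnth p j == i) (fun p => history G p j == h)
    <= mcnt m h i / ((m * n)%:R - (acnt h i)%:R - (Ycnt h)%:R).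
Proof.
move=> HPr HD.
have Hpos : (0 < #|[set p in Smn m n | history G p j == h]|)%N.
  move: HPr; rewrite /Pr; case: (posnP #|[set p in Smn m n | history G p j == h]|) => [->|//].
  by rewrite mul0r ltxx.
move: (Hpos); rewrite card_gt0 => /set0Pn [p0]; rewrite inE => /andP [Sp0 /eqP Hh].
have Hs := size_h m n G j h i p0 Hh.
have EE : [set p in Smn m n | history G p j == h] = Eset m n j h i.
  by apply/setP => p; rewrite !inE (E_char m n G j h i p0 p Hh).
have EA : #|[set p in Smn m n | predI (fun p : word m n => tnth p j == i)
                                  (fun p => history G p j == h) p]| = Nk m n j h i j.
  apply: eq_card => p; rewrite !inE /= (E_char m n G j h i p0 p Hh).
  by case: (tnth p j == i); rewrite ?andbT ?andbF //= andbT.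
rewrite /cPr /Pr EA EE. rewrite EE in Hpos.
set a := Nk m n j h i j. set b := #|Eset m n j h i|. set s := #|Smn m n|.
have Hsb : (0 < s)%N.
  apply: leq_trans Hpos _. apply: subset_leq_card; apply/subsetP => p.
  by rewrite inE => /andP [].
have H1 : (#|Fset m n j h i| * a <= b * (m - cc n h i))%N.
  rewrite -claim2 // -sum_nat_const. apply: leq_sum => k Hk. exact: claim1.
have H3 := claim3 m n j h i Hs.
have Hc : (cc n h i <= m)%N.
  have Cp0 : consb m n j h i p0 by rewrite -(E_char m n G j h i p0 p0 Hh) Hh.
  rewrite -(perp m n j h i p0 Sp0 Cp0 Hs); exact: leq_addl.
have -> : (a%:R / s%:R) / (b%:R / s%:R) = a%:R / b%:R :> rat.
  field. by rewrite !pnatr_eq0 -!lt0n Hpos Hsb.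
have Hbr : 0 < (b%:R : rat) by rewrite ltr0n.
rewrite ler_pdivrMr // mulrAC ler_pdivlMr //.
have -> : mcnt m h i = ((m - cc n h i)%N)%:R by rewrite /mcnt natrB.
set D := (_ - _ - _ : rat).
have HDF : D <= (#|Fset m n j h i|)%:R.
  have : ((m * n)%N%:R : rat) <= (#|Fset m n j h i|)%:R + (acnt h i)%:R + (Ycnt h)%:R.
    by rewrite -!natrD ler_nat.
  rewrite /D. lra.
apply: le_trans (_ : a%:R * (#|Fset m n j h i|)%:R <= _).
  by rewrite ler_wpM2l // ler0n.
by rewrite -!natrM ler_nat mulnC [X in (_ <= X)%N]mulnC.
Qed.
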